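(* Let $\kappa\ge1$ and $n\ge1$ be integers, let $G$ be a binary $\kappa\times n$ matrix, and let $q$ be its code definition vector. For a subset $R\subseteq\{1,\dots,n\}$ let $G_R$ be the submatrix of $G$ consisting of the columns indexed by $R$ (rank over $\mathbb{F}_2$, with $\mathrm{rank}(G_\emptyset)=0$). (a) For an integer $0<\mu\le n$, let $R$ be a uniformly random $\mu$-element subset of $\{1,\dots,n\}$ and set $L(n,\mu,q)=\mathbb{E}\big[|R|-\mathrm{rank}(G_R)\big]$. Then $L(n,\mu,q)=\mu-\kappa+\sum_{\delta=1}^{\kappa}K_\delta\sum_{S\in\Xi(W,\kappa-\delta)}\Phi(S,n,\mu,q).$ (b) For $0\le\epsilon\le1$, let $R$ be a random subset of $\{1,\dots,n\}$ containing each index independently with probability $1-\epsilon$, and set $l(n,\epsilon,q)=\mathbb{E}\big[|R|-\mathrm{rank}(G_R)\big]$. Then $l(n,\epsilon,q)=n(1-\epsilon)-\kappa+\sum_{\delta=1}^{\kappa}K_\delta\sum_{S\in\Xi(W,\kappa-\delta)}\phi(S,n,\epsilon,q),$ where in both cases $K_\delta=\prod_{i=1}^{\delta-1}(1-2^i)$ (so $K_1=1$).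
   Context: $W=\mathbb{F}_2^\kappa$; $\nu(i)\in W$ is the binary expansion of $i\in\{0,\dots,2^\kappa-1\}$. The code definition vector of a binary $\kappa\times n$ matrix $G$ is $q=(q_0,\dots,q_{2^\kappa-1})$ with $q_i$ equal to the number of columns of $G$ equal to $\nu(i)$, divided by $n$. For a subspace $S\subseteq W$, $\zeta(S,q)=\sum_{i:\nu(i)\in S}q_i$; $\Xi(S,d)$ is the set of all $d$-dimensional subspaces of $S$. Define $\Phi(S,n,\mu,q)=\prod_{i=0}^{\mu-1}\frac{\zeta(S,q)-i/n}{1-i/n}$ and $\phi(S,n,\epsilon,q)=\epsilon^{n(1-\zeta(S,q))}$ (convention $0^0=1$). (In the wiretap setting, for a coset code with base-code generator matrix $G$ and uniformly distributed message, $|R|-\mathrm{rank}(G_R)$ is the eavesdropper's information loss $I(M;Z)$ given revealed positions $R$, so $L$ and $l$ are the expected equivocation losses.) *)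

(* Defs.v *)
From mathcomp Require Import all_boot all_order all_algebra.
From mathcomp Require Import reals exp.
Set Implicit Arguments. Unset Strict Implicit. Unset Printing Implicit Defensive.
Import Order.TTheory GRing.Theory Num.Theory.
Local Open Scope ring_scope.

Section Defs.
Variable R : realType.
Variables k n : nat.

Definition W := 'rV['F_2]_k.

(* nu(i) = binary expansion of i : entry j is bit j of i. *)
Definition nu (i : 'I_(2 ^ k)) : W :=
  \row_(j < k) (odd (i %/ 2 ^ j))%:R.

Definition colW (G : 'M['F_2]_(k, n)) (j : 'I_n) : W := (col j G)^T.

Definition cdv (G : 'M['F_2]_(k, n)) (i : 'I_(2 ^ k)) : R :=
  #|[set j : 'I_n | colW G j == nu i]|%:R / n%:R.

Definition span_set (M : 'M['F_2]_k) : {set W} := [set v : W | (v <= M)%MS].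

Definition Xi (d : nat) : {set {set W}} :=
  [set S : {set W} | [exists M : 'M['F_2]_k, (S == span_set M) && (\rank M == d)]].

Definition zeta (S : {set W}) (q : 'I_(2 ^ k) -> R) : R :=
  \sum_(i < 2 ^ k | nu i \in S) q i.

Definition Phi (S : {set W}) (mu : nat) (q : 'I_(2 ^ k) -> R) : R :=
  \prod_(0 <= i < mu) ((zeta S q - i%:R / n%:R) / (1 - i%:R / n%:R)).

(* powR satisfies 0 `^ 0 = 1 *)
Definition phi (S : {set W}) (eps : R) (q : 'I_(2 ^ k) -> R) : R :=
  eps `^ (n%:R * (1 - zeta S q)).

Definition Kc (delta : nat) : R := \prod_(1 <= i < delta) (1 - 2 ^+ i).

Definition subcols (G : 'M['F_2]_(k, n)) (Rs : {set 'I_n}) : 'M['F_2]_(k, #|Rs|) :=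
  colsub (fun i : 'I_#|Rs| => enum_val i) G.

Definition loss (G : 'M['F_2]_(k, n)) (Rs : {set 'I_n}) : R :=
  #|Rs|%:R - (\rank (subcols G Rs))%:R.

Definition L_unif (G : 'M['F_2]_(k, n)) (mu : nat) : R :=
  (\sum_(Rs : {set 'I_n} | #|Rs| == mu) loss G Rs) / ('C(n, mu))%:R.

Definition l_bern (G : 'M['F_2]_(k, n)) (eps : R) : R :=
  \sum_(Rs : {set 'I_n}) ((1 - eps) ^+ #|Rs| * eps ^+ (n - #|Rs|)) * loss G Rs.

End Defs.

(* Main.v *)
Require Import Defs.
From mathcomp Require Import all_boot all_order all_algebra.
From mathcomp Require Import reals exp.
From mathcomp Require Import zify ring lra.
Set Implicit Arguments. Unset Strict Implicit. Unset Printing Implicit Defensive.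
Import Order.TTheory GRing.Theory Num.Theory.
Local Open Scope ring_scope.


Section LA.
Variable k : nat.
Local Notation F := 'F_2.

Lemma card_F2 : #|F| = 2%N.
Proof. by rewrite card_Fp. Qed.

Lemma card_span a (M : 'M[F]_(a, k)) :
  #|[set v : 'rV[F]_k | (v <= M)%MS]| = (2 ^ \rank M)%N.
Proof.
have -> : [set v : 'rV[F]_k | (v <= M)%MS] =
          [set u *m row_base M | u in 'rV[F]_(\rank M)].
  apply/setP=> v; rewrite inE -(eq_row_base M).
  apply/idP/imsetP=> [/submxP[u ->]| [u _ ->]]; first by exists u.
  exact: submxMl.
rewrite card_imset ?card_mx ?card_F2 ?mul1n //.
have [B AB1] := row_freeP (row_base_free M).
by apply: (can_inj (g := mulmx^~ B)) => v; rewrite -mulmxA AB1 mulmx1.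
Qed.

Lemma eqmx_rk m1 m2 (A : 'M[F]_(m1, k)) (B : 'M[F]_(m2, k)) :
  (A :=: B)%MS -> \rank A = \rank B.
Proof. by move=> E; exact: E.1. Qed.

Lemma rank_adds_row m (X : 'M[F]_(m, k)) (w : 'rV[F]_k) :
  \rank (X + w)%MS = (\rank X + ~~ (w <= X)%MS)%N.
Proof.
case: (boolP (w <= X)%MS) => [wX|wX].
  by rewrite addn0; have /addsmx_idPl E := wX; exact: eqmx_rk E.
apply/eqP; rewrite eqn_leq; apply/andP; split.
  have := mxrank_adds_leqif X w; case=> + _.
  by move/leq_trans; apply; rewrite leq_add2l rank_leq_row.
rewrite addn1 (ltn_leqif (mxrank_leqif_sup (addsmxSl X w))).
by rewrite addsmx_sub submx_refl.
Qed.

Lemma rank_col_mx m1 m2 (A : 'M[F]_(m1, k)) (B : 'M[F]_(m2, k)) :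
  \rank (col_mx A B) = \rank (A + B)%MS.
Proof. by rewrite (eqmx_rk (addsmxE A B)). Qed.

Lemma rank_col3 a j (V : 'M[F]_(a, k)) (w : 'rV[F]_k) (B' : 'M[F]_(j, k)) :
  \rank (col_mx V (col_mx w B')) = (\rank (V + B')%MS + ~~ (w <= V + B')%MS)%N.
Proof.
rewrite rank_col_mx (eqmx_rk (adds_eqmx (eqmx_refl V) (eqmx_sym (addsmxE w B')))).
by rewrite addsmxA (addsmxC V w) -addsmxA addsmxC rank_adds_row.
Qed.

Definition goodB j (U : 'M[F]_k) a (V : 'M[F]_(a, k)) :=
  [set B : 'M[F]_(j, k) | (B <= U)%MS && (\rank (col_mx V B) == \rank V + j)%N].

Lemma card_goodB j (U : 'M[F]_k) a (V : 'M[F]_(a, k)) : (V <= U)%MS ->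
  #|goodB j U V| = (\prod_(i < j) (2 ^ \rank U - 2 ^ (\rank V + i)))%N.
Proof.
move=> VU; elim: j => [|j IH].
  rewrite big_ord0; apply: (@eq_card1 _ 0) => B.
  rewrite !inE [B]flatmx0 sub0mx rank_col_mx.
  by rewrite addsmxC (eqmx_rk (addsmx_idPr (sub0mx _ _))) addn0 eqxx; case: eqP.
rewrite big_ord_recr /= -IH -[#|goodB j.+1 U V|]sum1_card.
rewrite (partition_big (fun B : 'M[F]_(1 + j, k) => dsubmx B) (mem (goodB j U V))) /=;
  last first.
  move=> B; rewrite !inE => /andP[BU rk].
  have BU' : (col_mx (usubmx B) (dsubmx B) <= U)%MS by rewrite vsubmxK.
  have rk' : \rank (col_mx V (col_mx (usubmx B) (dsubmx B))) = (\rank V + j.+1)%N.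
    by rewrite vsubmxK; exact/eqP.
  rewrite col_mx_sub in BU'; clear BU rk.
  move: (usubmx B) (dsubmx B) BU' rk' => w B' /andP[wU B'U] rk.
  rewrite B'U /= eqn_leq rank_col_mx; apply/andP; split.
    by apply: leq_trans (mxrank_adds_leqif _ _) _; rewrite leq_add2l rank_leq_row.
  move: rk; rewrite rank_col3; case: (~~ _) => /= rk; lia.
rewrite -sum_nat_const; apply: eq_bigr => B' /[!inE] /andP[B'U /eqP rkB'].
rewrite (reindex (fun w : 'rV[F]_k => col_mx w B')) /=; last first.
  exists (fun B : 'M[F]_(1 + j, k) => usubmx B) => [w _ | B]; first by rewrite col_mxKu.
  by case/andP=> _ /eqP <-; rewrite vsubmxK.
have X : forall w : 'rV[F]_k, (col_mx w B' \in goodB j.+1 U V) =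
    (w <= U)%MS && ~~ (w <= V + B')%MS.
  move=> w; rewrite !inE (col_mx_sub w B' U) B'U andbT (rank_col3 V w B') -rank_col_mx rkB'.
  by case: (w <= U)%MS => //; case: (~~ _) => /=; apply/eqP; lia.
transitivity (#|[set w : 'rV[F]_k | (w <= U)%MS] :\: [set w : 'rV[F]_k | (w <= V + B')%MS]|).
  rewrite -sum1_card; apply: eq_bigl => w; rewrite col_mxKd eqxx andbT X.
  by rewrite !inE andbC.
rewrite cardsD !card_span.
have sub : [set w : 'rV[F]_k | (w <= U)%MS] :&: [set w | (w <= V + B')%MS] =
           [set w | (w <= V + B')%MS].
  apply/setIidPr/subsetP=> w; rewrite !inE => /submx_trans; apply.
  by rewrite addsmx_sub VU B'U.
by rewrite sub card_span -rank_col_mx rkB'.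
Qed.

End LA.


Section P2.
Variable k : nat.
Local Notation F := 'F_2.

Lemma span_setP (M M' : 'M[F]_k) : span_set M = span_set M' -> (M == M')%MS.
Proof.
move=> E; apply/andP; split; apply/row_subP => i.
  have : row i M \in span_set M by rewrite inE row_sub.
  by rewrite E inE.
have : row i M' \in span_set M' by rewrite inE row_sub.
by rewrite -E inE.
Qed.

Lemma span_set_eq (M M' : 'M[F]_k) : (M == M')%MS -> span_set M = span_set M'.
Proof.
move=> /eqmxP E; apply/setP => v; rewrite !inE; exact: (E.2 _ v).2.
Qed.

Lemma rows_in_span a (V : 'M[F]_(a, k)) (M : 'M[F]_k) :
  [forall i, row i V \in span_set M] = (V <= M)%MS.
Proof.
apply/forallP/row_subP => H i; first by have := H i; rewrite inE.
by rewrite inE H.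
Qed.

Definition Xis a (V : 'M[F]_(a, k)) d :=
  [set S in Xi k d | [forall i, row i V \in S]].

Lemma Xis_small a (V : 'M[F]_(a, k)) d : (d < \rank V)%N -> Xis V d = set0.
Proof.
move=> lt; apply/setP => S; rewrite !inE.
apply/negbTE; apply/negP => /andP[/existsP[M /andP[/eqP -> /eqP rM]]].
rewrite rows_in_span => /mxrankS; rewrite rM; lia.
Qed.

Lemma Xis_card a (V : 'M[F]_(a, k)) d : (\rank V <= d)%N ->
  (#|Xis V d| * \prod_(i < d - \rank V) (2 ^ d - 2 ^ (\rank V + i)) =
   \prod_(i < d - \rank V) (2 ^ k - 2 ^ (\rank V + i)))%N.
Proof.
move=> le; set r := \rank V.
have -> : (2 ^ k)%N = (2 ^ \rank (1%:M : 'M[F]_k))%N by rewrite mxrank1.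
rewrite -(card_goodB (d - r) (submx1 V)) -[#|goodB _ _ _|]sum1_card.
rewrite (partition_big (fun B => span_set (V + B)%MS) (mem (Xis V d))) /=; last first.
  move=> B; rewrite !inE submx1 /= => /eqP rk; apply/andP; split.
    apply/existsP; exists (V + B)%MS; rewrite eqxx /= -rank_col_mx rk; apply/eqP; lia.
  by rewrite rows_in_span addsmxSl.
rewrite -sum_nat_const; apply: eq_bigr => S.
rewrite !inE => /andP[/existsP[M /andP[/eqP -> /eqP rM]]]; rewrite rows_in_span => VM.
have -> : (2 ^ d)%N = (2 ^ \rank M)%N by rewrite rM.
rewrite -(card_goodB (d - r) VM) -sum1_card; apply: eq_bigl => B.
rewrite !inE submx1 /=.
case: (boolP (\rank (col_mx V B) == (r + (d - r))%N)) => rk; last first.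
  by rewrite andbF.
rewrite andbT andTb; move: rk; rewrite rank_col_mx => /eqP rk.
apply/idP/idP => [BM | /eqP E].
  apply/eqP/span_set_eq; have sub : (V + B <= M)%MS by rewrite addsmx_sub VM BM.
  by rewrite -(mxrank_leqif_eq sub).2 rk rM; apply/eqP; lia.
have /andP[E1 _] := span_setP E.
exact: submx_trans (addsmxSr V B) E1.
Qed.

End P2.


Section P3.
Variable R : realType.

Definition Nq (m e : nat) : R := \prod_(i < e) (2 ^+ m - 2 ^+ i).
Definition gb (m e : nat) : R := Nq m e / Nq e e.

Lemma two_pow_diff (a b : nat) : (b < a)%N -> (2 ^+ a - 2 ^+ b : R) = ((2 ^ a - 2 ^ b)%N)%:R.
Proof.
move=> lt; rewrite natrB ?natrX //.
by rewrite leq_exp2l // ltnW.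
Qed.

Lemma two_pow_neq (a b : nat) : (b < a)%N -> (2 ^+ a - 2 ^+ b : R) != 0.
Proof.
move=> lt; rewrite two_pow_diff // pnatr_eq0 -lt0n subn_gt0 ltn_exp2l //.
Qed.

Lemma Nq_neq0 e : Nq e e != 0.
Proof. by apply/prodf_neq0 => i _; apply: two_pow_neq. Qed.

Lemma Nq_recr m e : Nq m e.+1 = Nq m e * (2 ^+ m - 2 ^+ e).
Proof. by rewrite /Nq big_ord_recr. Qed.

Lemma Nq_recl m e : Nq m.+1 e.+1 = (2 ^+ m.+1 - 1) * 2 ^+ e * Nq m e.
Proof.
rewrite /Nq big_ord_recl expr0 -mulrA; congr (_ * _).
have -> : (2:R) ^+ e = \prod_(i < e) 2 by rewrite prodr_const card_ord.
rewrite -big_split /=.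
by apply: eq_bigr => i _; rewrite /bump /= add1n !exprS; ring.
Qed.

Lemma gb_m0 m : gb m 0 = 1.
Proof. by rewrite /gb /Nq !big_ord0 divr1. Qed.

Lemma gb_mm m : gb m m = 1.
Proof. by rewrite /gb divff // Nq_neq0. Qed.

Lemma gb_pascal m e : (e <= m)%N ->
  gb m.+1 e.+1 = gb m e.+1 + 2 ^+ (m - e) * gb m e.
Proof.
move=> le; rewrite /gb (Nq_recl m e) (Nq_recl e e) (Nq_recr m e).
have hm : (2 : R) ^+ m = 2 ^+ e * 2 ^+ (m - e) by rewrite -exprD subnKC.
have h0 := Nq_neq0 e.
have hx : (2 : R) ^+ e != 0 by rewrite expf_neq0 // pnatr_eq0.
have hy : (2 ^+ e.+1 - 1 : R) != 0 by rewrite -(expr0 2) two_pow_neq.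
rewrite !exprS hm; rewrite exprS in hy.
move: hy hx; set x := (2 : R) ^+ e; set y := (2 : R) ^+ (m - e) => hy hx.
by field; rewrite h0 hx hy.
Qed.

Lemma Kc1 : Kc R 1 = 1.
Proof. by rewrite /Kc big_geq. Qed.

Lemma Kc_rec d : (1 <= d)%N -> Kc R d.+1 = Kc R d * (1 - 2 ^+ d).
Proof. by move=> h; rewrite /Kc big_nat_recr. Qed.

Lemma gb_sum m : \sum_(e < m) Kc R (m - e) * gb m e = m%:R.
Proof.
elim: m => [|m IH]; first by rewrite big_ord0.
rewrite big_ord_recl subn0 gb_m0 mulr1.
have E1 : forall e : 'I_m, Kc R (m.+1 - bump 0 e) * gb m.+1 (bump 0 e) =
   Kc R (m - e) * gb m e.+1 + Kc R (m - e) * 2 ^+ (m - e) * gb m e.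
  move=> e; rewrite /bump /= add1n subSS gb_pascal; last by apply: ltnW.
  ring.
rewrite (eq_bigr _ (fun e _ => E1 e)) big_split /=.
have C : \sum_(e < m.+1) Kc R (m.+1 - e) * gb m e =
         Kc R m.+1 * gb m 0 + \sum_(e < m) Kc R (m - e) * gb m e.+1.
  by rewrite big_ord_recl subn0; congr (_ + _); apply: eq_bigr => e _;
     rewrite /bump /= add1n subSS.
rewrite big_ord_recr /= subSn // subnn Kc1 gb_mm gb_m0 mul1r mulr1 in C.
have E2 : forall e : 'I_m, Kc R (m.+1 - e) * gb m e =
   Kc R (m - e) * gb m e - Kc R (m - e) * 2 ^+ (m - e) * gb m e.
  move=> e; rewrite subSn ?Kc_rec; last by apply: ltnW.
    by ring.
  by rewrite subn_gt0.
rewrite (eq_bigr _ (fun e _ => E2 e)) sumrB /= in C.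
have -> : \sum_(e < m) Kc R (m - e) * gb m e.+1 =
  \sum_(i < m) Kc R (m - i) * gb m i - \sum_(i < m) Kc R (m - i) * 2 ^+ (m - i) * gb m i +
  1 - Kc R m.+1 by lra.
by rewrite IH -addn1 natrD; lra.
Qed.

End P3.


Section P4.
Variable R : realType.
Variable k : nat.
Local Notation F := 'F_2.

Lemma cast_prod (u r j : nat) : (r + j <= u)%N ->
  ((\prod_(i < j) (2 ^ u - 2 ^ (r + i)))%N%:R : R) =
  (\prod_(i < j) (2:R) ^+ r) * Nq R (u - r) j.
Proof.
move=> le; rewrite natr_prod /Nq -big_split /=; apply: eq_bigr => i _; have := ltn_ord i.
move=> lt; rewrite natrB ?natrX; last by rewrite leq_exp2l //; lia.
by rewrite mulrBr -!exprD subnKC //; lia.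
Qed.

Lemma Xis_gb a (V : 'M[F]_(a, k)) d : (d <= k - \rank V)%N ->
  (#|Xis V (k - d)|%:R : R) = gb R (k - \rank V) (k - \rank V - d).
Proof.
move=> le; have rk := rank_leq_col V; set r := \rank V in le rk *.
have h : (r <= k - d)%N by lia.
have := Xis_card h => /(congr1 (fun x : nat => x%:R : R)).
rewrite natrM !cast_prod; try lia.
have -> : (k - d - r = k - r - d)%N by lia.
set c := \prod_(i < _) _.
have c0 : c != 0 by apply/prodf_neq0 => i _; rewrite expf_neq0 // pnatr_eq0.
rewrite /gb => E; apply: (mulfI c0); apply: (mulIf (Nq_neq0 R (k - r - d))).
by rewrite -mulrA mulrCA E -[RHS]mulrA divfK ?Nq_neq0.
Qed.

Lemma KL a (V : 'M[F]_(a, k)) :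
  \sum_(1 <= d < k.+1) Kc R d * (#|Xis V (k - d)|%:R) = k%:R - (\rank V)%:R.
Proof.
have rk := rank_leq_col V; set r := \rank V in rk *; set m := (k - r)%N.
rewrite -natrB // (big_cat_nat _ (n := m.+1)) /=; try lia.
rewrite [X in _ + X]big1_seq ?addr0; last first.
  move=> d /andP[_]; rewrite mem_index_iota => /andP[h1 h2].
  by rewrite Xis_small ?cards0 ?mulr0 //; rewrite /r; lia.
rewrite (@eq_big_nat _ _ _ _ _ _ (fun d => Kc R d * gb R m (m - d))); last first.
  by move=> d /andP[h1 h2]; rewrite Xis_gb //; rewrite /m; lia.
rewrite big_nat_rev /= big_add1 /= big_mkord -(gb_sum R m).
apply: eq_bigr => i _; have := ltn_ord i => lt.
have -> : (1 + m.+1 - i.+2 = m - i)%N by lia.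
by have -> : (m - (m - i) = i)%N by lia.
Qed.

End P4.


Lemma bits_inj m i i' : (i < 2 ^ m)%N -> (i' < 2 ^ m)%N ->
  (forall j, (j < m)%N -> odd (i %/ 2 ^ j) = odd (i' %/ 2 ^ j)) -> i = i'.
Proof.
elim: m i i' => [|m IH] i i' hi hi' H; first by rewrite expn0 in hi hi'; lia.
have h0 := H 0%N (ltn0Sn _); rewrite expn0 !divn1 in h0.
have E : i./2 = i'./2.
  apply: IH.
  - by rewrite -divn2 ltn_divLR // -expnSr.
  - by rewrite -divn2 ltn_divLR // -expnSr.
  move=> j lt; have := H j.+1 lt; by rewrite -!divn2 -!divnMA -expnS.
by rewrite -(odd_double_half i) -(odd_double_half i') h0 E.
Qed.

Section P5.
Variable R : realType.
Variables k n : nat.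
Local Notation F := 'F_2.

Lemma nu_inj : injective (@nu k).
Proof.
move=> i i' E; apply: val_inj; apply: (@bits_inj k); [exact: ltn_ord|exact: ltn_ord|move=> j lt].
have := congr1 (fun v : W k => v 0 (Ordinal lt)) E; rewrite /nu !mxE /=.
by case: (odd _); case: (odd _) => //= /eqP; rewrite ?oner_eq0 // eq_sym oner_eq0.
Qed.

Lemma nu_bij : bijective (@nu k).
Proof.
apply: (inj_card_bij nu_inj); rewrite card_ord /W card_mx card_F2 mul1n //.
Qed.

Definition Tset (G : 'M[F]_(k, n)) (S : {set W k}) := [set j | colW G j \in S].

Lemma zetaE (G : 'M[F]_(k, n)) S : zeta S (cdv R G) = #|Tset G S|%:R / n%:R.
Proof.
rewrite /zeta /cdv -mulr_suml -natr_sum; congr (_%:R / _).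
rewrite -(@reindex _ _ _ _ _ (@nu k) (fun w => w \in S)
   (fun w : W k => #|[set j | colW G j == w]|) (onW_bij _ nu_bij)) /=.
rewrite -sum1_card (partition_big (@colW k n G) (fun w => w \in S)) /=; last first.
  by move=> j; rewrite inE.
apply: eq_bigr => w wS; rewrite -sum1_card; apply: eq_bigl => j.
rewrite !inE; case: eqP => [-> | _]; by rewrite ?wS ?andbF.
Qed.

Definition Vof (G : 'M[F]_(k, n)) (Rs : {set 'I_n}) := (subcols G Rs)^T.

Lemma rows_Vof (G : 'M[F]_(k, n)) Rs (S : {set W k}) :
  [forall i, row i (Vof G Rs) \in S] = (Rs \subset Tset G S).
Proof.
have rw : forall i, row i (Vof G Rs) = colW G (enum_val i).
  by move=> i; rewrite /Vof -tr_col /subcols col_colsub.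
apply/forallP/subsetP => [H j jR | H i].
  have := H (enum_rank_in jR j); rewrite rw enum_rankK_in // => h.
  by rewrite inE.
by rewrite rw; have := H _ (enum_valP i); rewrite inE.
Qed.

Lemma sum_ind (T : finType) (A : pred T) (P : pred T) :
  \sum_(S in A) ((P S)%:R : R) = #|[set S in A | P S]|%:R.
Proof.
transitivity (\sum_(S in A | P S) (1 : R)).
  by rewrite big_mkcondr /=; apply: eq_bigr => S _; case: (P S).
rewrite sumr_const; congr (_ *+ _); apply: eq_card => S; by rewrite !inE.
Qed.

Lemma loss_dec (G : 'M[F]_(k, n)) Rs :
  loss R G Rs = #|Rs|%:R - k%:R +
    \sum_(1 <= d < k.+1) Kc R d *
       \sum_(S in Xi k (k - d)) ((Rs \subset Tset G S)%:R).
Proof.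
have := KL R (Vof G Rs); rewrite /Vof mxrank_tr => E.
rewrite /loss; have -> : \sum_(1 <= d < k.+1) Kc R d *
       \sum_(S in Xi k (k - d)) ((Rs \subset Tset G S)%:R) =
    \sum_(1 <= d < k.+1) Kc R d * #|Xis (Vof G Rs) (k - d)|%:R.
  apply: eq_bigr => d _; rewrite sum_ind; congr (_ * _%:R).
  by apply: eq_card => S; rewrite !inE rows_Vof.
by rewrite /Vof E; ring.
Qed.

End P5.


Section P6.
Variable R : realType.
Variables k n : nat.
Local Notation F := 'F_2.

Lemma lin (om : {set 'I_n} -> R) (G : 'M[F]_(k, n)) :
  \sum_(Rs : {set 'I_n}) om Rs * loss R G Rs =
  \sum_(Rs : {set 'I_n}) om Rs * #|Rs|%:R - k%:R * \sum_(Rs : {set 'I_n}) om Rs +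
  \sum_(1 <= d < k.+1) Kc R d * \sum_(S in Xi k (k - d))
      \sum_(Rs : {set 'I_n}) om Rs * (Rs \subset Tset G S)%:R.
Proof.
rewrite (eq_bigr (fun Rs => om Rs * #|Rs|%:R - k%:R * om Rs +
   \sum_(1 <= d < k.+1) Kc R d * \sum_(S in Xi k (k - d))
      om Rs * (Rs \subset Tset G S)%:R)); last first.
  move=> Rs _; rewrite loss_dec mulrDr mulrBr [k%:R * _]mulrC; congr (_ + _).
  rewrite mulr_sumr; apply: eq_bigr => d _; rewrite mulr_sumr mulr_sumr.
  by rewrite mulr_sumr; apply: eq_bigr => S _; ring.
rewrite big_split sumrB /= -mulr_sumr; congr (_ + _).
rewrite exchange_big /=; apply: eq_big => // d _.
by rewrite -mulr_sumr exchange_big.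
Qed.

Lemma sum_ind' (T : finType) (P : pred T) :
  \sum_(S : T) ((P S)%:R : R) = #|[set S | P S]|%:R.
Proof.
transitivity (\sum_(S | P S) (1 : R)).
  by rewrite [RHS]big_mkcond /=; apply: eq_big => // S _; case: (P S).
rewrite sumr_const; congr (_ *+ _); apply: eq_card => S; by rewrite !inE.
Qed.

Lemma cnt1 (T : {set 'I_n}) mu :
  \sum_(Rs : {set 'I_n}) ((#|Rs| == mu)%:R * (Rs \subset T)%:R : R) = 'C(#|T|, mu)%:R.
Proof.
rewrite -cards_draws -sum_ind'; apply: eq_bigr => Rs _.
by case: (_ == _); case: (_ \subset _); rewrite ?mulr0 ?mulr1.
Qed.

Lemma ffact_R c m : ((c ^_ m)%N%:R : R) = \prod_(0 <= i < m) (c%:R - i%:R).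
Proof.
elim: m => [|m IH]; first by rewrite big_geq.
rewrite ffactnSr natrM big_nat_recr //= -IH.
have [h|h] := leqP m c; first by rewrite natrB.
by rewrite ffact_small // mulr0n !mul0r.
Qed.

Lemma Phi_eq (G : 'M[F]_(k, n)) S mu : (0 < mu <= n)%N ->
  Phi n S mu (cdv R G) = 'C(#|Tset G S|, mu)%:R / 'C(n, mu)%:R.
Proof.
move=> /andP[h0 h1]; rewrite /Phi zetaE; set c := #|Tset G S|.
have n0 : (n%:R : R) != 0 by rewrite pnatr_eq0; lia.
rewrite (@eq_big_nat _ _ _ _ _ _ (fun i => (c%:R - i%:R) / (n%:R - i%:R))); last first.
  move=> i /andP[_ hi]; have ni : (n%:R - i%:R : R) != 0.
    by rewrite -natrB ?pnatr_eq0; lia.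
  by field; rewrite n0 ni.
rewrite prodf_div -!ffact_R.
have f0 : ((mu`!)%:R : R) != 0 by rewrite pnatr_eq0 -lt0n fact_gt0.
have fn : ((n ^_ mu)%:R : R) != 0 by rewrite pnatr_eq0 -lt0n ffact_gt0.
have binR x : ('C(x, mu)%:R : R) = (x ^_ mu)%:R / mu`!%:R.
  by rewrite -bin_ffact natrM mulfK.
by rewrite !binR; field; rewrite fn f0.
Qed.

End P6.


Section P7.
Variable R : realType.
Variables n : nat.

Definition wt (e : R) (Rs : {set 'I_n}) := (1 - e) ^+ #|Rs| * e ^+ (n - #|Rs|).

Lemma Bsum (e : R) (T : {set 'I_n}) :
  \sum_(Rs : {set 'I_n}) wt e Rs * (Rs \subset T)%:R = e ^+ (n - #|T|).
Proof.
have hT : (#|T| <= n)%N by rewrite -[n in (_ <= n)%N]card_ord max_card.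
transitivity (\sum_(Rs : {set 'I_n} | Rs \subset T) wt e Rs).
  by rewrite [RHS]big_mkcond; apply: eq_big => // Rs _; case: ifP; rewrite ?mulr1 ?mulr0.
rewrite (partition_big (fun Rs : {set 'I_n} => (inord #|Rs| : 'I_(#|T|.+1))) xpredT) //=.
transitivity (\sum_(j < #|T|.+1) ((1 - e) ^+ j * e ^+ (n - j)) *+ 'C(#|T|, j)).
  apply: eq_bigr => j _.
  rewrite (eq_bigl (fun Rs : {set 'I_n} => (Rs \subset T) && (#|Rs| == j))); last first.
    move=> Rs; case: (boolP (Rs \subset T)) => //= sub.
    have le : (#|Rs| <= #|T|)%N := subset_leq_card sub.
    by rewrite -(inj_eq val_inj) /= inordK.
  rewrite (eq_bigr (fun _ => (1 - e) ^+ j * e ^+ (n - j))); last first.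
    by move=> Rs /andP[_ /eqP <-].
  rewrite sumr_const; congr (_ *+ _); rewrite -cards_draws.
  by apply: eq_card => Rs; rewrite !inE.
set y := 1 - e; have one : (1 : R) = e + y by rewrite /y; ring.
rewrite -[RHS]mulr1 -(expr1n R #|T|) [in RHS]one exprDn mulr_sumr.
apply: eq_bigr => j _; have := ltn_ord j => lj.
rewrite mulrnAr mulrA -exprD mulrC.
by have -> : (n - #|T| + (#|T| - j) = n - j)%N by lia.
Qed.

Lemma wsum1 (e : R) : \sum_(Rs : {set 'I_n}) wt e Rs = 1.
Proof.
have := Bsum e setT; rewrite cardsT card_ord subnn expr0 => <-.
by apply: eq_bigr => Rs _; rewrite subsetT mulr1.
Qed.

Lemma wsumcard (e : R) : (1 <= n)%N ->
  \sum_(Rs : {set 'I_n}) wt e Rs * #|Rs|%:R = n%:R * (1 - e).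
Proof.
move=> n1.
have E : forall Rs : {set 'I_n}, (#|Rs|%:R : R) = \sum_(x : 'I_n) (x \in Rs)%:R.
  by move=> Rs; rewrite sum_ind'; congr (_%:R); apply: eq_card => x; rewrite inE.
rewrite (eq_bigr (fun Rs => \sum_(x : 'I_n) wt e Rs * (x \in Rs)%:R)); last first.
  by move=> Rs _; rewrite E mulr_sumr.
rewrite exchange_big /=.
rewrite (eq_bigr (fun _ => 1 - e)) ?sumr_const ?card_ord ?mulr_natl //.
move=> x _.
rewrite (eq_bigr (fun Rs => wt e Rs - wt e Rs * (Rs \subset [set~ x])%:R)); last first.
  move=> Rs _; rewrite subsetC sub1set in_setC.
  by case: (x \in Rs); rewrite /= ?mulr1 ?mulr0 ?subr0 ?subrr.
rewrite sumrB wsum1 Bsum cardsC1 card_ord.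
by have -> : (n - n.-1 = 1)%N by lia.
Qed.

End P7.


Section P8.
Variable R : realType.
Variables k n : nat.
Local Notation F := 'F_2.

Lemma phi_eq (G : 'M[F]_(k, n)) S (e : R) : 0 <= e -> (1 <= n)%N ->
  phi n S e (cdv R G) = e ^+ (n - #|Tset G S|).
Proof.
move=> e0 n1; rewrite /phi zetaE.
have hT : (#|Tset G S| <= n)%N by rewrite -[n in (_ <= n)%N]card_ord max_card.
have n0 : (n%:R : R) != 0 by rewrite pnatr_eq0; lia.
have -> : n%:R * (1 - #|Tset G S|%:R / n%:R) = (n - #|Tset G S|)%:R :> R.
  by rewrite natrB //; field.
by rewrite powR_mulrn.
Qed.

Lemma partA (G : 'M[F]_(k, n)) mu : (0 < mu <= n)%N ->
  L_unif R G mu = mu%:R - k%:R +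
       \sum_(1 <= delta < k.+1)
          Kc R delta * \sum_(S in Xi k (k - delta)) Phi n S mu (cdv R G).
Proof.
move=> hmu; set C := ('C(n, mu)%:R : R).
have C0 : C != 0 by rewrite pnatr_eq0 -lt0n bin_gt0; lia.
have E : L_unif R G mu =
    \sum_(Rs : {set 'I_n}) ((#|Rs| == mu)%:R / C) * loss R G Rs.
  rewrite /L_unif mulr_suml big_mkcond /=; apply: eq_bigr => Rs _.
  by case: (#|Rs| == mu) => /=; rewrite ?mulr1n ?mulr0n ?mul0r // mulrC mul1r.
have key : forall T : {set 'I_n}, forall x : R,
    \sum_(Rs : {set 'I_n}) ((#|Rs| == mu)%:R / C) * ((Rs \subset T)%:R * x) =
    'C(#|T|, mu)%:R * x / C.
  move=> T x; rewrite -cnt1 mulr_suml mulr_suml; apply: eq_bigr => Rs _; ring.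
rewrite E lin; congr (_ + _).
  have := key setT mu%:R; rewrite cardsT card_ord -/C => E1.
  have := key setT 1; rewrite cardsT card_ord -/C => E2.
  have S1 : \sum_(Rs : {set 'I_n}) (#|Rs| == mu)%:R / C * #|Rs|%:R = mu%:R.
    transitivity (C * mu%:R / C); last by rewrite mulrAC divff // mul1r.
    rewrite -E1; apply: eq_bigr => Rs _.
    by rewrite subsetT; case: eqP => [->|_]; rewrite /= ?mulr1n ?mulr0n ?mul0r ?mul1r.
  have S2 : \sum_(Rs : {set 'I_n}) (#|Rs| == mu)%:R / C = 1.
    transitivity (C * 1 / C); last by rewrite mulr1 divff.
    by rewrite -E2; apply: eq_bigr => Rs _; rewrite subsetT !mulr1.
  by rewrite S1 S2 mulr1.
apply: eq_bigr => d _; congr (_ * _); apply: eq_bigr => S _.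
rewrite Phi_eq // -/C; have := key (Tset G S) 1; rewrite mulr1 => <-.
by apply: eq_bigr => Rs _; rewrite mulr1.
Qed.

Lemma partB (G : 'M[F]_(k, n)) (eps : R) : (1 <= n)%N -> 0 <= eps <= 1 ->
  l_bern G eps =
       n%:R * (1 - eps) - k%:R +
       \sum_(1 <= delta < k.+1)
          Kc R delta * \sum_(S in Xi k (k - delta)) phi n S eps (cdv R G).
Proof.
move=> n1 /andP[e0 e1].
have -> : l_bern G eps = \sum_(Rs : {set 'I_n}) wt eps Rs * loss R G Rs by [].
rewrite lin wsumcard // wsum1 mulr1; congr (_ + _).
apply: eq_bigr => d _; congr (_ * _); apply: eq_bigr => S _.
by rewrite Bsum phi_eq.
Qed.

End P8.

Unset Implicit Arguments. Set Strict Implicit.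

Theorem theorem1 (R : realType) (k n : nat) (G : 'M['F_2]_(k, n)) :
  (1 <= k)%N -> (1 <= n)%N ->
  (forall mu : nat, (0 < mu <= n)%N ->
     L_unif R G mu =
       mu%:R - k%:R +
       \sum_(1 <= delta < k.+1)
          Kc R delta * \sum_(S in Xi k (k - delta)) Phi n S mu (cdv R G))
  /\
  (forall eps : R, 0 <= eps <= 1 ->
     l_bern G eps =
       n%:R * (1 - eps) - k%:R +
       \sum_(1 <= delta < k.+1)
          Kc R delta * \sum_(S in Xi k (k - delta)) phi n S eps (cdv R G)).
Proof.
move=> hk hn; split.
  by move=> mu hmu; apply: partA.
by move=> eps he; apply: partB.
Qed.
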